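(* Let $\mathbf{x}:M\to\mathbb{R}^4_1$ be a complete, algebraic stationary surface, and let $z$ be a local complex coordinate on (the oriented double cover of) $M$ centered at a good singular end $z=0$ with multiplicity $\widetilde d=1$ and index $\mathrm{ind}=m\ge 1$, whose flux vector is zero (i.e. $\mathbf{x}_z\,\mathrm{d}z$ has zero residue at $z=0$). Then the vector-valued meromorphic function $\mathbf{x}_z$ has a Laurent expansion around $z=0$ of the form $$\mathbf{x}_z=\Big(\sum_{k=1}^m\frac{\alpha_{k+2}}{z^{k+2}}\Big)\mathbf{v}_0+\frac{1}{z^2}\mathbf{v}_1+O(1),$$ where $\alpha_{k+2}\in\mathbb{C}$ with $\alpha_{m+2}\neq 0$, $\mathbf{v}_0\in\mathbb{R}^4_1$ is a nonzero lightlike vector, $\mathbf{v}_1\in\mathbb{C}^4_1$ is an isotropic vector, and $\mathbf{v}_0,\mathrm{Re}(\mathbf{v}_1),\mathrm{Im}(\mathbf{v}_1)$ span a degenerate $3$-dimensional subspace of $\mathbb{R}^4_1$.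
   Context: $\mathbb{R}^4_1$ is $\mathbb{R}^4$ with the Lorentz inner product $\langle \mathbf{x},\mathbf{x}\rangle=x_1^2+x_2^2+x_3^2-x_4^2$, extended complex-bilinearly to $\mathbb{C}^4_1=\mathbb{C}^4$; a vector $\mathbf{v}\in\mathbb{C}^4_1$ is isotropic if $\langle\mathbf{v},\mathbf{v}\rangle=0$, and a real vector is lightlike if it is nonzero with $\langle\mathbf{v},\mathbf{v}\rangle=0$. A stationary surface is a spacelike immersed surface with zero mean curvature; locally $\mathbf{x}=2\,\mathrm{Re}\int(\phi+\psi,\,-\mathrm{i}(\phi-\psi),\,1-\phi\psi,\,1+\phi\psi)\,\mathrm{d}h$ with meromorphic Gauss maps $\phi,\psi$ and holomorphic $1$-form $\mathrm{d}h$, so $\mathbf{x}_z\,\mathrm{d}z=(\phi+\psi,-\mathrm{i}(\phi-\psi),1-\phi\psi,1+\phi\psi)\,\mathrm{d}h$. Algebraic means $\mathbf{x}_z\,\mathrm{d}z$ extends meromorphically to a compact Riemann surface from which finitely many punctures (the ends) are removed. An end $p$ is singular if $\phi(p)=\overline{\psi(p)}$; if $\phi$ and $\psi$ take this common value (conjugated for $\psi$) with multiplicities $m'$ and $n'$ at $p$, the end is good when $m'\ne n'$, and its index is $\mathrm{ind}_p=m'$ if $m'<n'$ and $\mathrm{ind}_p=-n'$ if $m'>n'$ (for a regular end, $\mathrm{ind}_p=0$); $\mathrm{ind}^+_p=|\mathrm{ind}_p|$. The multiplicity of the end is $\widetilde d=d-\mathrm{ind}^+_p$, where $d+1$ is the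 order of the pole of $\mathbf{x}_z\,\mathrm{d}z$ at $p$. *)

(* Defs.v *)
From Stdlib Require Import Reals ZArith.
From Coquelicot Require Import Coquelicot.

Local Open Scope C_scope.

Record V4 := mkV4 { vc1 : C ; vc2 : C ; vc3 : C ; vc4 : C }.
Record R4 := mkR4 { vr1 : R ; vr2 : R ; vr3 : R ; vr4 : R }.

Definition V4add (u v : V4) : V4 :=
  mkV4 (vc1 u + vc1 v) (vc2 u + vc2 v) (vc3 u + vc3 v) (vc4 u + vc4 v).
Definition V4scale (a : C) (v : V4) : V4 :=
  mkV4 (a * vc1 v) (a * vc2 v) (a * vc3 v) (a * vc4 v).
Definition V4zero : V4 := mkV4 0 0 0 0.
Definition V4norm (v : V4) : R :=
  (Cmod (vc1 v) + Cmod (vc2 v) + Cmod (vc3 v) + Cmod (vc4 v))%R.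

Definition R4toV4 (v : R4) : V4 :=
  mkV4 (RtoC (vr1 v)) (RtoC (vr2 v)) (RtoC (vr3 v)) (RtoC (vr4 v)).
Definition V4Re (v : V4) : R4 := mkR4 (Re (vc1 v)) (Re (vc2 v)) (Re (vc3 v)) (Re (vc4 v)).
Definition V4Im (v : V4) : R4 := mkR4 (Im (vc1 v)) (Im (vc2 v)) (Im (vc3 v)) (Im (vc4 v)).

Definition R4zero : R4 := mkR4 0 0 0 0.
Definition R4lin3 (a b c : R) (u1 u2 u3 : R4) : R4 :=
  mkR4 (a * vr1 u1 + b * vr1 u2 + c * vr1 u3)%R
       (a * vr2 u1 + b * vr2 u2 + c * vr2 u3)%R
       (a * vr3 u1 + b * vr3 u2 + c * vr3 u3)%R
       (a * vr4 u1 + b * vr4 u2 + c * vr4 u3)%R.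

Definition lorR (u v : R4) : R :=
  (vr1 u * vr1 v + vr2 u * vr2 v + vr3 u * vr3 v - vr4 u * vr4 v)%R.
Definition lorC (u v : V4) : C :=
  vc1 u * vc1 v + vc2 u * vc2 v + vc3 u * vc3 v - vc4 u * vc4 v.

Definition isotropic (v : V4) : Prop := lorC v v = 0.
Definition lightlike (v : R4) : Prop := v <> R4zero /\ lorR v v = 0%R.

(** [u1,u2,u3] span a 3-dimensional subspace of R^4_1 on which the Lorentz
    form is degenerate (its radical is nonzero). *)
Definition span_degenerate_3dim (u1 u2 u3 : R4) : Prop :=
  (forall a b c : R, R4lin3 a b c u1 u2 u3 = R4zero -> a = 0%R /\ b = 0%R /\ c = 0%R) /\
  (exists a b c : R,
      let w := R4lin3 a b c u1 u2 u3 in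
      w <> R4zero /\ lorR w u1 = 0%R /\ lorR w u2 = 0%R /\ lorR w u3 = 0%R).

(** [laurent f r a]: on the punctured disc 0 < |z| < r, f is given by the
    convergent Laurent series  sum_{k in Z} a_k z^k  with finite principal part
    (i.e. f is meromorphic at 0, holomorphic on the punctured disc). *)
Definition laurent (f : C -> C) (r : R) (a : Z -> C) : Prop :=
  (0 < r)%R /\
  exists N : nat,
    (forall k : Z, (k < - Z.of_nat N)%Z -> a k = 0) /\
    forall z : C, (0 < Cmod z < r)%R ->
      is_series (fun n : nat => a (Z.of_nat n - Z.of_nat N)%Z * Cpow z n)
                (Cpow z N * f z).

Definition laurentV (F : C -> V4) (r : R) (b : Z -> V4) : Prop :=
  laurent (fun z => vc1 (F z)) r (fun k => vc1 (b k)) /\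
  laurent (fun z => vc2 (F z)) r (fun k => vc2 (b k)) /\
  laurent (fun z => vc3 (F z)) r (fun k => vc3 (b k)) /\
  laurent (fun z => vc4 (F z)) r (fun k => vc4 (b k)).

Definition has_order (a : Z -> C) (k : Z) : Prop :=
  a k <> 0 /\ forall j : Z, (j < k)%Z -> a j = 0.
Definition has_orderV (b : Z -> V4) (k : Z) : Prop :=
  b k <> V4zero /\ forall j : Z, (j < k)%Z -> b j = V4zero.

(** Values in the Riemann sphere: [Some c] is c in C, [None] is infinity. *)
Definition oconj (v : option C) : option C :=
  match v with Some c => Some (Cconj c) | None => None end.

(** The meromorphic germ with Laurent coefficients [a] takes the value [v] at 0
    with multiplicity [mu] (>= 1). *)
Definition mult_value (a : Z -> C) (v : option C) (mu : nat) : Prop :=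
  (1 <= mu)%nat /\
  match v with
  | Some c => has_order (fun k => if Z.eqb k 0 then a k - c else a k) (Z.of_nat mu)
  | None => has_order a (- Z.of_nat mu)%Z
  end.

(** The end z = 0 is singular: phi(0) = conj(psi(0)). *)
Definition singular_end (aphi apsi : Z -> C) : Prop :=
  exists v m' n', mult_value aphi v m' /\ mult_value apsi (oconj v) n'.

Definition good_singular_end (aphi apsi : Z -> C) : Prop :=
  exists v m' n', mult_value aphi v m' /\ mult_value apsi (oconj v) n' /\ m' <> n'.

Definition end_index (aphi apsi : Z -> C) (i : Z) : Prop :=
  (exists v m' n', mult_value aphi v m' /\ mult_value apsi (oconj v) n' /\
     (((m' < n')%nat /\ i = Z.of_nat m') \/ ((n' < m')%nat /\ i = (- Z.of_nat n')%Z)))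
  \/ (~ singular_end aphi apsi /\ i = 0%Z).

(** x_z from the Weierstrass data (phi, psi, dh = hp dz). *)
Definition xz (phi psi hp : C -> C) (z : C) : V4 :=
  mkV4 ((phi z + psi z) * hp z)
       ((- Ci * (phi z - psi z)) * hp z)
       ((1 - phi z * psi z) * hp z)
       ((1 + phi z * psi z) * hp z).

(* Main.v *)
Require Import Defs.
From Stdlib Require Import Reals ZArith Lra Lia.
From Coquelicot Require Import Coquelicot.

Local Open Scope C_scope.

Lemma plusC (x y : C) : @plus C_AbelianGroup x y = Cplus x y.
Proof. reflexivity. Qed.
Lemma scalC (x y : C) : @scal C_AbsRing C_NormedModule x y = Cmult x y.
Proof. reflexivity. Qed.
Lemma oppC (x : C) : @opp C_AbelianGroup x = Copp x.
Proof. reflexivity. Qed.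

Definition Lim0 (f : C -> C) (L : C) : Prop :=
  forall eps : R, (0 < eps)%R -> exists delta : R, (0 < delta)%R /\
    forall z : C, (0 < Cmod z < delta)%R -> (Cmod (f z - L) < eps)%R.

Lemma Cmod_sub_sym (x y : C) : Cmod (x - y) = Cmod (y - x).
Proof. replace (x - y) with (-(y - x)) by ring. apply Cmod_opp. Qed.

Lemma Cmod_tri3 (x y : C) : (Cmod x <= Cmod (x - y) + Cmod y)%R.
Proof. replace x with ((x - y) + y) at 1 by ring. apply Cmod_triangle. Qed.

Lemma Lim0_unique (f : C -> C) (L1 L2 : C) : Lim0 f L1 -> Lim0 f L2 -> L1 = L2.
Proof.
  intros H1 H2. destruct (Ceq_dec L1 L2) as [e|ne]; auto. exfalso.
  assert (hp : (0 < Cmod (L1 - L2))%R).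
  { apply Cmod_gt_0. intro h. apply ne. replace L1 with ((L1 - L2) + L2) by ring. rewrite h. ring. }
  set (e := (Cmod (L1 - L2) / 2)%R).
  destruct (H1 e ltac:(unfold e; lra)) as [d1 [hd1 H1']].
  destruct (H2 e ltac:(unfold e; lra)) as [d2 [hd2 H2']].
  set (t := (Rmin d1 d2 / 2)%R).
  assert (ht : (0 < t)%R) by (unfold t; generalize (Rmin_glb_lt d1 d2 0 hd1 hd2); lra).
  assert (hmt : Cmod (RtoC t) = t) by (rewrite Cmod_R; apply Rabs_pos_eq; lra).
  assert (t < d1)%R by (unfold t; generalize (Rmin_l d1 d2) (Rmin_glb_lt d1 d2 0 hd1 hd2); lra).
  assert (t < d2)%R by (unfold t; generalize (Rmin_r d1 d2) (Rmin_glb_lt d1 d2 0 hd1 hd2); lra).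
  specialize (H1' (RtoC t) ltac:(rewrite hmt; lra)).
  specialize (H2' (RtoC t) ltac:(rewrite hmt; lra)).
  assert (Cmod (L1 - L2) <= Cmod (f t - L2) + Cmod (f t - L1))%R.
  { replace (L1 - L2) with ((f t - L2) + -(f t - L1)) by ring.
    eapply Rle_trans; [apply Cmod_triangle|]. rewrite Cmod_opp. lra. }
  unfold e in *; lra.
Qed.

Lemma Lim0_ext (f g : C -> C) (L : C) : (exists rho, (0 < rho)%R /\ forall z, (0 < Cmod z < rho)%R -> f z = g z) ->
  Lim0 f L -> Lim0 g L.
Proof.
  intros [rho [hr he]] H eps heps. destruct (H eps heps) as [d [hd H']].
  exists (Rmin d rho). split. apply Rmin_glb_lt; auto.
  intros z hz. rewrite <- he. apply H'. generalize (Rmin_l d rho); lra.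
  generalize (Rmin_r d rho); lra.
Qed.

Lemma Lim0_const (c : C) : Lim0 (fun _ => c) c.
Proof. intros eps he. exists 1%R. split. lra. intros. replace (c - c) with (RtoC 0) by ring.
  rewrite Cmod_0. lra. Qed.

Lemma Lim0_id : Lim0 (fun z => z) 0.
Proof. intros eps he. exists eps. split. lra. intros z hz. replace (z - 0) with z by ring. lra. Qed.

Lemma Lim0_plus (f g : C -> C) (L M : C) : Lim0 f L -> Lim0 g M -> Lim0 (fun z => f z + g z) (L + M).
Proof.
  intros H1 H2 eps he.
  destruct (H1 (eps/2)%R ltac:(lra)) as [d1 [hd1 H1']].
  destruct (H2 (eps/2)%R ltac:(lra)) as [d2 [hd2 H2']].
  exists (Rmin d1 d2). split. apply Rmin_glb_lt; auto.
  intros z hz. assert (Cmod z < d1)%R by (generalize (Rmin_l d1 d2); lra).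
  assert (Cmod z < d2)%R by (generalize (Rmin_r d1 d2); lra).
  replace (f z + g z - (L + M)) with ((f z - L) + (g z - M)) by ring.
  eapply Rle_lt_trans. apply Cmod_triangle.
  specialize (H1' z ltac:(lra)). specialize (H2' z ltac:(lra)). lra.
Qed.

Lemma Lim0_mult (f g : C -> C) (L M : C) : Lim0 f L -> Lim0 g M -> Lim0 (fun z => f z * g z) (L * M).
Proof.
  intros H1 H2 eps he.
  assert (hL := Cmod_ge_0 L). assert (hM := Cmod_ge_0 M).
  set (e1 := (eps / (2 * (Cmod M + 1)))%R).
  set (e2 := Rmin 1 (eps / (2 * (Cmod L + 1)))).
  assert (he1 : (0 < e1)%R) by (unfold e1; apply Rdiv_lt_0_compat; lra).
  assert (he2 : (0 < e2)%R). { unfold e2. apply Rmin_glb_lt. lra. apply Rdiv_lt_0_compat; lra. }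
  destruct (H1 e1 he1) as [d1 [hd1 H1']].
  destruct (H2 e2 he2) as [d2 [hd2 H2']].
  exists (Rmin d1 d2). split. apply Rmin_glb_lt; auto.
  intros z hz. assert (Cmod z < d1)%R by (generalize (Rmin_l d1 d2); lra).
  assert (Cmod z < d2)%R by (generalize (Rmin_r d1 d2); lra).
  specialize (H1' z ltac:(lra)). specialize (H2' z ltac:(lra)).
  replace (f z * g z - L * M) with ((f z - L) * g z + L * (g z - M)) by ring.
  eapply Rle_lt_trans. apply Cmod_triangle. rewrite !Cmod_mult.
  assert (hg : (Cmod (g z) <= Cmod (g z - M) + Cmod M)%R) by apply Cmod_tri3.
  assert (A2 : (Cmod (g z - M) < eps / (2 * (Cmod L + 1)))%R).
  { generalize (Rmin_r 1 (eps / (2 * (Cmod L + 1)))). fold e2. lra. }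
  assert (A0 : (Cmod (g z - M) < 1)%R).
  { generalize (Rmin_l 1 (eps / (2 * (Cmod L + 1)))). fold e2. lra. }
  assert (hgz := Cmod_ge_0 (g z)). assert (hfl := Cmod_ge_0 (f z - L)).
  assert (hgm := Cmod_ge_0 (g z - M)).
  assert (B1 : (Cmod (f z - L) * Cmod (g z) <= e1 * (Cmod M + 1))%R).
  { apply Rmult_le_compat; lra. }
  assert (B2 : (Cmod L * Cmod (g z - M) <= Cmod L * (eps / (2 * (Cmod L + 1))))%R).
  { apply Rmult_le_compat_l; lra. }
  assert (E1 : (e1 * (Cmod M + 1) = eps / 2)%R) by (unfold e1; field; lra).
  assert (E2 : (Cmod L * (eps / (2 * (Cmod L + 1))) < eps / 2)%R).
  { apply Rlt_le_trans with ((Cmod L + 1) * (eps / (2 * (Cmod L + 1))))%R.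
    apply Rmult_lt_compat_r. apply Rdiv_lt_0_compat; lra. lra. right; field; lra. }
  lra.
Qed.

Lemma Lim0_scal (c : C) (f : C -> C) (L : C) : Lim0 f L -> Lim0 (fun z => c * f z) (c * L).
Proof. intro H. apply (Lim0_mult (fun _ => c) f). apply Lim0_const. exact H. Qed.

Lemma Lim0_opp (f : C -> C) (L : C) : Lim0 f L -> Lim0 (fun z => - f z) (- L).
Proof. intro H. eapply Lim0_ext. exists 1%R; split; [lra|]. intros z _. 
  instantiate (1 := fun z => (-1) * f z). simpl. ring.
  replace (-L) with ((-1) * L) by ring. apply Lim0_scal, H. Qed.

Lemma Lim0_minus (f g : C -> C) (L M : C) : Lim0 f L -> Lim0 g M -> Lim0 (fun z => f z - g z) (L - M).
Proof. intros. apply Lim0_plus; auto. apply Lim0_opp; auto. Qed.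

Lemma Lim0_pow k : (1 <= k)%nat -> Lim0 (fun z => Cpow z k) 0.
Proof. induction k; intro hk. lia. destruct k.
  eapply Lim0_ext. exists 1%R; split; [lra|]. intros z _. instantiate (1 := fun z => z). simpl. ring.
  apply Lim0_id.
  eapply Lim0_ext. exists 1%R; split; [lra|]. intros z _. instantiate (1 := fun z => z * Cpow z (S k)).
  simpl. reflexivity.
  replace (RtoC 0) with (0 * 0) by ring. apply Lim0_mult. apply Lim0_id. apply IHk. lia. Qed.

Lemma Lim0_inv (f : C -> C) (L : C) : L <> 0 -> Lim0 f L -> Lim0 (fun z => / f z) (/ L).
Proof.
  intros hL H eps he.
  assert (hl : (0 < Cmod L)%R) by (apply (proj1 (Cmod_gt_0 L)); exact hL).
  set (e := Rmin (Cmod L / 2) (eps * (Cmod L * Cmod L) / 2)).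
  assert (hee : (0 < e)%R). { unfold e. apply Rmin_glb_lt. lra. 
    apply Rdiv_lt_0_compat; [apply Rmult_lt_0_compat; [lra| apply Rmult_lt_0_compat; lra]|lra]. }
  destruct (H e hee) as [d [hd H']]. exists d; split; auto.
  intros z hz. specialize (H' z hz).
  assert (e1 : (Cmod (f z - L) < Cmod L / 2)%R) by (generalize (Rmin_l (Cmod L / 2) (eps * (Cmod L * Cmod L) / 2)); fold e; lra).
  assert (e2 : (Cmod (f z - L) < eps * (Cmod L * Cmod L) / 2)%R) by (generalize (Rmin_r (Cmod L / 2) (eps * (Cmod L * Cmod L) / 2)); fold e; lra).
  assert (hf : (Cmod L / 2 < Cmod (f z))%R).
  { generalize (Cmod_tri3 L (f z)). rewrite Cmod_sub_sym. lra. }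
  assert (fz0 : f z <> 0). { intro h. rewrite h, Cmod_0 in hf. lra. }
  replace (/ f z - / L) with ((L - f z) * / (f z * L)) by (field; auto).
  rewrite Cmod_mult, Cmod_inv, Cmod_mult by (apply Cmult_neq_0; auto).
  rewrite Cmod_sub_sym.
  apply Rlt_le_trans with (eps * (Cmod L * Cmod L) / 2 * / (Cmod (f z) * Cmod L))%R.
  apply Rmult_lt_compat_r. apply Rinv_0_lt_compat. apply Rmult_lt_0_compat; lra. exact e2.
  apply Rle_trans with (eps * (Cmod L * Cmod L) / 2 * / (Cmod L / 2 * Cmod L))%R.
  apply Rmult_le_compat_l. apply Rmult_le_pos. apply Rmult_le_pos; [lra| apply Rmult_le_pos; lra]. lra.
  apply Rinv_le_contravar. apply Rmult_lt_0_compat; lra. apply Rmult_le_compat_r; lra.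
  right. field. lra.
Qed.
Lemma normC (x : C) : @norm C_AbsRing C_NormedModule x = Cmod x.
Proof. reflexivity. Qed.

Lemma geom_half_le n : (sum_n (fun k => (1/2)^k) n <= 2)%R.
Proof.
  assert (forall n, sum_n (fun k => (1/2)^k) n = 2 - (1/2)^n)%R.
  { induction n0. rewrite sum_O. simpl. lra. rewrite sum_Sn, IHn0. simpl. change (plus ?x ?y) with (x + y)%R. field. }
  rewrite H. generalize (pow_le (1/2) n ltac:(lra)). lra.
Qed.

Lemma series_bound (a : nat -> C) (l : C) (B : R) :
  is_series a l -> (forall n, Cmod (sum_n a n) <= B)%R -> (Cmod l <= B)%R.
Proof.
  intros H hb.
  assert (hl : is_lim_seq (fun n => norm (sum_n a n)) (norm l)).
  { unfold is_lim_seq. eapply filterlim_comp. exact H. apply filterlim_norm. }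
  assert (h2 := is_lim_seq_le _ _ _ _ (fun n => hb n) hl (is_lim_seq_const B)).
  simpl in h2. rewrite normC in h2. exact h2.
Qed.

Lemma PS_bound (c : nat -> C) (Sf : C -> C) (r : R) : (0 < r)%R ->
  (forall z, (0 < Cmod z < r)%R -> is_series (fun n => c n * Cpow z n) (Sf z)) ->
  exists rho M, (0 < rho)%R /\ forall z, (0 < Cmod z < rho)%R -> (Cmod (Sf z) <= M)%R.
Proof.
  intros hr H.
  set (z0 := RtoC (r/2)).
  assert (hz0 : Cmod z0 = (r/2)%R) by (unfold z0; rewrite Cmod_R; apply Rabs_pos_eq; lra).
  specialize (H z0 ltac:(rewrite hz0; lra)) as H0.
  destruct (filterlim_bounded (fun n => sum_n (fun n => c n * Cpow z0 n) n) (ex_intro _ _ H0)) as [M0 hM0].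
  assert (tb : forall n, (Cmod (c n) * (r/2)^n <= 2 * M0)%R).
  { intro n. rewrite <- hz0, <- Cmod_pow, <- Cmod_mult.
    assert (hp := hM0 0%nat). rewrite normC in hp. rewrite sum_O in hp.
    assert (0 <= M0)%R by (generalize (Cmod_ge_0 (c 0%nat * Cpow z0 0)); lra).
    destruct n. lra.
    assert (e : c (S n) * Cpow z0 (S n) = sum_n (fun n => c n * Cpow z0 n) (S n) - sum_n (fun n => c n * Cpow z0 n) n).
    { rewrite sum_Sn. unfold plus; simpl; ring. }
    rewrite e.
    replace (sum_n (fun n => c n * Cpow z0 n) (S n) - sum_n (fun n => c n * Cpow z0 n) n) with
      (sum_n (fun n => c n * Cpow z0 n) (S n) + - sum_n (fun n => c n * Cpow z0 n) n) by ring.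
    eapply Rle_trans. apply Cmod_triangle. rewrite Cmod_opp. 
    generalize (hM0 n) (hM0 (S n)). intros Ha Hb. change (@norm _ _ ?x) with (Cmod x) in Ha, Hb. lra. }
  exists (r/4)%R, (4 * M0)%R. split. lra.
  intros z hz. apply (series_bound _ _ _ (H z ltac:(lra))).
  intro n. rewrite <- normC. unfold sum_n at 1. eapply Rle_trans. exact (@norm_sum_n_m C_AbsRing C_NormedModule (fun n => c n * Cpow z n) 0 n).
  apply Rle_trans with (sum_n_m (fun k => 2 * M0 * (1/2)^k) 0 n)%R.
  apply sum_n_m_le. intro k. rewrite normC, Cmod_mult, Cmod_pow.
  apply Rle_trans with (Cmod (c k) * (r/2)^k * (1/2)^k)%R.
  rewrite Rmult_assoc, <- Rpow_mult_distr. apply Rmult_le_compat_l. apply Cmod_ge_0.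
  apply pow_incr. split. apply Cmod_ge_0. lra.
  apply Rmult_le_compat_r. apply pow_le; lra. apply tb.
  assert (0 <= M0)%R by (generalize (hM0 0%nat) (norm_ge_0 (sum_n (fun n => c n * Cpow z0 n) 0)); lra).
  assert (e : (sum_n_m (fun k => 2 * M0 * (1/2)^k) 0 n = 2 * M0 * sum_n (fun k => (1/2)^k) n)%R).
  { unfold sum_n. induction n. rewrite !sum_n_n. reflexivity.
    rewrite !sum_n_Sm by lia. rewrite IHn. unfold plus; simpl; ring. }
  rewrite e. generalize (geom_half_le n). nra.
Qed.

Lemma PS_shift (c : nat -> C) (z s : C) : z <> 0 ->
  is_series (fun n => c n * Cpow z n) s -> is_series (fun n => c (S n) * Cpow z n) ((s - c 0%nat) / z).
Proof.
  intros hz H.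
  assert (H1 : is_series (fun k => c (S k) * Cpow z (S k)) (s - c 0%nat)).
  { apply (@is_series_incr_1 C_AbsRing C_NormedModule (fun n => c n * Cpow z n)). match goal with |- is_series _ ?l => replace l with s; auto end.
    cbn. ring. }
  apply (@is_series_scal C_AbsRing C_NormedModule) with (c := / z) in H1.
  replace ((s - c 0%nat) / z) with (@scal C_AbsRing C_NormedModule (/ z) (s - c 0%nat)) by (cbn; field; auto).
  eapply is_series_ext; [|exact H1]. intro n. cbn. field. auto.
Qed.

Lemma PS_shiftq (c : nat -> C) (z s : C) (q : nat) : z <> 0 ->
  (forall n, (n < q)%nat -> c n = 0) ->
  is_series (fun n => c n * Cpow z n) s -> is_series (fun n => c (n + q)%nat * Cpow z n) (s / Cpow z q).
Proof.
  intros hz. induction q; intros hq H.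
  - eapply is_series_ext; [|replace (s / Cpow z 0) with s; [exact H| simpl; field]].
    intro n. rewrite Nat.add_0_r. reflexivity.
  - specialize (IHq (fun n h => hq n ltac:(lia)) H).
    apply (PS_shift (fun n => c (n + q)%nat)) in IHq; auto.
    eapply is_series_ext; [|replace (s / Cpow z (S q)) with ((s / Cpow z q - c (0 + q)%nat) / z)]; [|exact IHq|].
    intro n. simpl. rewrite Nat.add_succ_r. reflexivity.
    rewrite hq by lia. simpl. field. split; auto. apply Cpow_nz; auto.
Qed.

Lemma PS_lim0 (c : nat -> C) (Sf : C -> C) (r : R) : (0 < r)%R ->
  (forall z, (0 < Cmod z < r)%R -> is_series (fun n => c n * Cpow z n) (Sf z)) ->
  Lim0 Sf (c 0%nat).
Proof.
  intros hr H.
  assert (H' : forall z, (0 < Cmod z < r)%R -> is_series (fun n => c (Datatypes.S n) * Cpow z n) ((Sf z - c 0%nat) / z)).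
  { intros z hz. apply PS_shift. intro e. rewrite e, Cmod_0 in hz. lra. auto. }
  destruct (PS_bound _ _ _ hr H') as [rho [M [hrho hM]]].
  intros eps he. exists (Rmin (Rmin rho r) (eps / (Rabs M + 1)))%R. split.
  { apply Rmin_glb_lt. apply Rmin_glb_lt; lra. apply Rdiv_lt_0_compat. lra. generalize (Rabs_pos M); lra. }
  intros z hz.
  assert (h1 : (Cmod z < rho)%R) by (generalize (Rmin_l (Rmin rho r) (eps / (Rabs M + 1))) (Rmin_l rho r); lra).
  assert (h2 : (Cmod z < r)%R) by (generalize (Rmin_l (Rmin rho r) (eps / (Rabs M + 1))) (Rmin_r rho r); lra).
  assert (h3 : (Cmod z < eps / (Rabs M + 1))%R) by (generalize (Rmin_r (Rmin rho r) (eps / (Rabs M + 1))); lra).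
  assert (hz0 : z <> 0) by (intro e; rewrite e, Cmod_0 in hz; lra).
  replace (Sf z - c 0%nat) with (z * ((Sf z - c 0%nat) / z)) by (field; auto).
  rewrite Cmod_mult. specialize (hM z ltac:(lra)).
  assert (hMa := Rle_abs M). assert (hmm := Cmod_ge_0 ((Sf z - c 0%nat) / z)).
  apply Rle_lt_trans with (Cmod z * (Rabs M + 1))%R.
  apply Rmult_le_compat_l. apply Cmod_ge_0. lra.
  apply Rlt_le_trans with (eps / (Rabs M + 1) * (Rabs M + 1))%R.
  apply Rmult_lt_compat_r. generalize (Rabs_pos M); lra. exact h3.
  right. field. generalize (Rabs_pos M); lra.
Qed.

Lemma PS_lim (c : nat -> C) (Sf : C -> C) (r : R) (q : nat) : (0 < r)%R ->
  (forall z, (0 < Cmod z < r)%R -> is_series (fun n => c n * Cpow z n) (Sf z)) ->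
  (forall n, (n < q)%nat -> c n = 0) ->
  Lim0 (fun z => Sf z / Cpow z q) (c q).
Proof.
  intros hr H hq.
  apply (PS_lim0 (fun n => c (n + q)%nat) _ r hr).
  intros z hz. apply PS_shiftq; auto. intro e; rewrite e, Cmod_0 in hz; lra.
Qed.

Lemma nz_of_mod (z : C) : (0 < Cmod z)%R -> z <> 0.
Proof. intros h e. rewrite e, Cmod_0 in h. lra. Qed.

Lemma lim_coef (f : C -> C) (r : R) (a : Z -> C) (j i : nat) : laurent f r a ->
  (forall k, (k < Z.of_nat i - Z.of_nat j)%Z -> a k = 0) ->
  Lim0 (fun z => Cpow z j * f z / Cpow z i) (a (Z.of_nat i - Z.of_nat j)%Z).
Proof.
  intros [hr [N [HN Hs]]] Hk.
  destruct (le_lt_dec j (N + i)) as [hle|hlt].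
  - set (q := (N + i - j)%nat).
    assert (Hq : forall n, (n < q)%nat -> a (Z.of_nat n - Z.of_nat N)%Z = 0).
    { intros n hn. apply Hk. unfold q in hn. lia. }
    assert (L := PS_lim (fun n => a (Z.of_nat n - Z.of_nat N)%Z) (fun z => Cpow z N * f z) r q hr Hs Hq).
    replace (a (Z.of_nat i - Z.of_nat j)%Z) with (a (Z.of_nat q - Z.of_nat N)%Z) by (f_equal; unfold q; lia).
    eapply Lim0_ext; [|exact L]. exists 1%R. split. lra. intros z hz.
    assert (hz0 := nz_of_mod z ltac:(lra)).
    assert (e : Cpow z (N + i) = Cpow z q * Cpow z j) by (rewrite <- Cpow_add_r; f_equal; unfold q; lia).
    rewrite Cpow_add_r in e.
    assert (Cpow z i <> 0) by (apply Cpow_nz; auto).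
    assert (Cpow z q <> 0) by (apply Cpow_nz; auto).
    assert (Cpow z N <> 0) by (apply Cpow_nz; auto).
    field_simplify_eq; auto. 
    transitivity (f z * (Cpow z N * Cpow z i)). ring. rewrite e. ring.
  - set (t := (j - i - N)%nat).
    assert (L := PS_lim (fun n => a (Z.of_nat n - Z.of_nat N)%Z) (fun z => Cpow z N * f z) r 0 hr Hs
      (fun n hn => False_ind _ (Nat.nlt_0_r n hn))).
    replace (a (Z.of_nat i - Z.of_nat j)%Z) with (a (Z.of_nat 0 - Z.of_nat N)%Z * 0)
      by (rewrite (HN (Z.of_nat i - Z.of_nat j)%Z) by lia; ring).
    eapply Lim0_ext; [|apply Lim0_mult; [exact L| apply (Lim0_pow t); unfold t; lia]].
    exists 1%R. split. lra. intros z hz.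
    assert (hz0 := nz_of_mod z ltac:(lra)).
    assert (e : Cpow z j = Cpow z N * Cpow z t * Cpow z i) by (rewrite <- !Cpow_add_r; f_equal; unfold t; lia).
    assert (Cpow z i <> 0) by (apply Cpow_nz; auto).
    rewrite e. simpl. field. auto.
Qed.

Lemma coef_lim (f : C -> C) (r : R) (a : Z -> C) (j : nat) (L : C) : laurent f r a ->
  Lim0 (fun z => Cpow z j * f z) L ->
  (forall k, (k < - Z.of_nat j)%Z -> a k = 0) /\ a (- Z.of_nat j)%Z = L.
Proof.
  intros HL HLim. destruct HL as [hr [N [HN Hs]]] eqn:EHL.
  assert (claim : forall t : nat, forall k, (k < - Z.of_nat N + Z.of_nat t)%Z -> (k < - Z.of_nat j)%Z -> a k = 0).
  { induction t; intros k h1 h2. apply HN. lia.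
    destruct (Z_lt_le_dec k (- Z.of_nat N + Z.of_nat t)) as [h3|h3]. apply IHt; auto.
    set (j' := Z.to_nat (- k)).
    assert (Hq : forall k', (k' < Z.of_nat 0 - Z.of_nat j')%Z -> a k' = 0).
    { intros k' hk'. unfold j' in hk'. apply IHt; lia. }
    assert (L1 := lim_coef f r a j' 0 HL Hq).
    replace (Z.of_nat 0 - Z.of_nat j')%Z with k in L1 by (unfold j'; lia).
    assert (L2 : Lim0 (fun z => Cpow z j' * f z / Cpow z 0) (0 * L)).
    { eapply Lim0_ext; [|apply Lim0_mult; [apply (Lim0_pow (j' - j)); unfold j'; lia|exact HLim]].
      exists 1%R; split. lra. intros z hz. 
      replace j' with ((j' - j) + j)%nat at 2 by (unfold j'; lia). rewrite Cpow_add_r. simpl. field. }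
    rewrite (Lim0_unique _ _ _ L1 L2). ring. }
  assert (hk : forall k, (k < - Z.of_nat j)%Z -> a k = 0).
  { intros k hk. destruct (Z_lt_le_dec k (- Z.of_nat N)) as [h|h]. apply HN; auto.
    apply (claim (Z.to_nat (k + Z.of_nat N + 1))); lia. }
  split; auto.
  assert (L1 := lim_coef f r a j 0 HL (fun k hk' => hk k ltac:(simpl in hk'; lia))).
  replace (Z.of_nat 0 - Z.of_nat j)%Z with (- Z.of_nat j)%Z in L1 by lia.
  apply (Lim0_unique _ _ _ L1). eapply Lim0_ext; [|exact HLim].
  exists 1%R; split. lra. intros z hz. simpl. field.
Qed.

Definition lauN (f : C -> C) (r : R) (a : Z -> C) (N : nat) : Prop :=
  (forall k : Z, (k < - Z.of_nat N)%Z -> a k = 0) /\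
  forall z : C, (0 < Cmod z < r)%R ->
    is_series (fun n : nat => a (Z.of_nat n - Z.of_nat N)%Z * Cpow z n) (Cpow z N * f z).

Lemma lauN_S f r a N : lauN f r a N -> lauN f r a (S N).
Proof.
  intros [HN Hs]. split. intros k hk. apply HN. lia.
  intros z hz. specialize (Hs z hz).
  apply (@is_series_scal C_AbsRing C_NormedModule) with (c := z) in Hs.
  apply (@is_series_decr_1 C_AbsRing C_NormedModule).
  rewrite (HN (Z.of_nat 0 - Z.of_nat (S N))%Z) by lia.
  match goal with |- is_series _ ?l => replace l with (@scal C_AbsRing C_NormedModule z (Cpow z N * f z)) end.
  eapply is_series_ext; [|exact Hs]. intro n. cbv beta.
  replace (Z.of_nat (S n) - Z.of_nat (S N))%Z with (Z.of_nat n - Z.of_nat N)%Z by lia. cbn. ring.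
  cbn. ring.
Qed.

Lemma lauN_mono f r a N N' : (N <= N')%nat -> lauN f r a N -> lauN f r a N'.
Proof. intros h. induction h; auto. intro H. apply lauN_S; auto. Qed.

Lemma laurent_lauN f r a : laurent f r a <-> (0 < r)%R /\ exists N, lauN f r a N.
Proof. reflexivity. Qed.

Lemma laurent_lin (f g : C -> C) r a a' (al be : C) : laurent f r a -> laurent g r a' ->
  laurent (fun z => al * f z + be * g z) r (fun k => al * a k + be * a' k).
Proof.
  rewrite !laurent_lauN. intros [hr [N1 H1]] [_ [N2 H2]]. split; auto.
  exists (max N1 N2).
  apply (lauN_mono _ _ _ _ (max N1 N2) (Nat.le_max_l N1 N2)) in H1.
  apply (lauN_mono _ _ _ _ (max N1 N2) (Nat.le_max_r N1 N2)) in H2.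
  destruct H1 as [HN1 Hs1]. destruct H2 as [HN2 Hs2]. split.
  intros k hk. rewrite HN1, HN2 by auto. ring.
  intros z hz. specialize (Hs1 z hz). specialize (Hs2 z hz).
  apply (@is_series_scal C_AbsRing C_NormedModule) with (c := al) in Hs1.
  apply (@is_series_scal C_AbsRing C_NormedModule) with (c := be) in Hs2.
  assert (Hp := @is_series_plus C_AbsRing C_NormedModule _ _ _ _ Hs1 Hs2).
  match goal with |- is_series _ ?l => replace l with
    (@plus (NormedModule.AbelianMonoid C_AbsRing C_NormedModule)
      (@scal C_AbsRing C_NormedModule al (Cpow z (max N1 N2) * f z))
      (@scal C_AbsRing C_NormedModule be (Cpow z (max N1 N2) * g z))) by (cbn; ring) end.
  eapply is_series_ext; [|exact Hp]. intro n. cbn. ring.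
Qed.

Lemma laurent_ext (f g : C -> C) r a a' : (forall k, a k = a' k) ->
  (forall z, (0 < Cmod z < r)%R -> f z = g z) -> laurent f r a -> laurent g r a'.
Proof.
  intros ha hf [hr [N [HN Hs]]]. split; auto. exists N. split.
  intros k hk. rewrite <- ha. auto.
  intros z hz. rewrite <- hf by auto. eapply is_series_ext; [|exact (Hs z hz)].
  intro n. cbv beta. rewrite ha. reflexivity.
Qed.

Lemma is_series_zero : @is_series C_AbsRing C_NormedModule (fun _ => RtoC 0) (RtoC 0).
Proof.
  unfold is_series. eapply filterlim_ext; [|apply filterlim_const].
  intro n. simpl. symmetry. unfold sum_n.
  exact (@sum_n_m_const_zero (NormedModule.AbelianMonoid C_AbsRing C_NormedModule) 0 n).
Qed.

Lemma laurent_mono (c : C) (q : nat) (r : R) : (0 < r)%R ->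
  laurent (fun z => c / Cpow z q) r (fun k => if Z.eqb k (- Z.of_nat q) then c else 0).
Proof.
  intros hr. split; auto. exists q. split.
  intros k hk. destruct (Z.eqb_spec k (- Z.of_nat q)). lia. reflexivity.
  intros z hz. assert (hz0 := nz_of_mod z ltac:(lra)).
  apply (@is_series_decr_1 C_AbsRing C_NormedModule).
  replace (Z.eqb (Z.of_nat 0 - Z.of_nat q) (- Z.of_nat q)) with true by (symmetry; apply Z.eqb_eq; lia).
  match goal with |- is_series _ ?l => replace l with (RtoC 0) end.
  eapply is_series_ext; [|exact is_series_zero]. intro n. cbn beta.
  replace (Z.eqb (Z.of_nat (S n) - Z.of_nat q) (- Z.of_nat q)) with false by (symmetry; apply Z.eqb_neq; lia).
  change (RtoC 0 = RtoC 0 * Cpow z (S n)); ring.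
  cbn. field. apply Cpow_nz; auto.
Qed.

Lemma Lim0_bounded f L : Lim0 f L -> exists rho M, (0 < rho)%R /\
  forall z, (0 < Cmod z < rho)%R -> (Cmod (f z) <= M)%R.
Proof.
  intros H. destruct (H 1%R ltac:(lra)) as [d [hd Hd]]. exists d, (Cmod L + 1)%R. split; auto.
  intros z hz. specialize (Hd z hz). generalize (Cmod_tri3 (f z) L). lra.
Qed.

Lemma Lim0_nonzero f L : Lim0 f L -> L <> 0 -> exists rho, (0 < rho)%R /\
  forall z, (0 < Cmod z < rho)%R -> f z <> 0.
Proof.
  intros H hL. assert (hl : (0 < Cmod L)%R) by (apply (proj1 (Cmod_gt_0 L)); exact hL).
  destruct (H (Cmod L / 2)%R ltac:(lra)) as [d [hd Hd]]. exists d. split; auto.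
  intros z hz e. specialize (Hd z hz). rewrite e in Hd.
  replace (0 - L) with (- L) in Hd by ring. rewrite Cmod_opp in Hd. lra.
Qed.

Lemma pp_remove (p : nat) : forall (f : C -> C) r a, laurent f r a ->
  (forall k, (k < - Z.of_nat p)%Z -> a k = 0) ->
  Lim0 (fun z => f z - sum_n_m (fun j => a (- Z.of_nat j)%Z / Cpow z j) 1 p) (a 0%Z).
Proof.
  induction p; intros f r a HL Hk.
  - assert (L := lim_coef f r a 0 0 HL (fun k hk => Hk k ltac:(simpl in *; lia))).
    eapply Lim0_ext; [|exact L]. exists 1%R. split. lra. intros z hz.
    rewrite sum_n_m_zero by lia. cbn. field.
  - set (c := a (- Z.of_nat (S p))%Z).
    assert (HL' := laurent_lin _ _ r a _ 1 (-1) HL (laurent_mono c (S p) r (proj1 HL))).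
    assert (Hk' : forall k, (k < - Z.of_nat p)%Z ->
       (fun k => 1 * a k + -1 * (if Z.eqb k (- Z.of_nat (S p)) then c else 0)) k = 0).
    { intros k hk. cbv beta. destruct (Z.eqb_spec k (- Z.of_nat (S p))).
      subst k. unfold c. ring. rewrite Hk by lia. ring. }
    specialize (IHp _ _ _ HL' Hk'). cbv beta in IHp.
    replace (a 0%Z) with (1 * a 0%Z + -1 * (if Z.eqb 0 (- Z.of_nat (S p)) then c else 0)).
    2:{ replace (Z.eqb 0 (- Z.of_nat (S p))) with false by (symmetry; apply Z.eqb_neq; lia). ring. }
    eapply Lim0_ext; [|exact IHp]. exists 1%R. split. lra. intros z hz.
    rewrite sum_n_Sm by lia.
    rewrite (sum_n_m_ext_loc (fun j => (1 * a (- Z.of_nat j)%Z + -1 * (if Z.eqb (- Z.of_nat j) (- Z.of_nat (S p)) then c else 0)) / Cpow z j)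
      (fun j => a (- Z.of_nat j)%Z / Cpow z j)).
    2:{ intros k hk. replace (Z.eqb (- Z.of_nat k) (- Z.of_nat (S p))) with false by (symmetry; apply Z.eqb_neq; lia). 
        cbn. field. apply Cpow_nz. apply nz_of_mod; lra. }
    unfold c. cbn. ring.
Qed.

Lemma sum_split (G : nat -> C) (m : nat) :
  sum_n_m G 1 (m + 2) = G 1%nat + G 2%nat + sum_n_m (fun k => G (k + 2)%nat) 1 m.
Proof.
  induction m.
  - simpl. rewrite (sum_n_m_zero _ 1 0) by lia. rewrite sum_n_Sm by lia. rewrite sum_n_n. cbn. ring.
  - replace (S m + 2)%nat with (S (m + 2)) by lia. rewrite sum_n_Sm by lia. rewrite IHm.
    rewrite (sum_n_Sm (fun k => G (k + 2)%nat)) by lia. cbn. ring.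
Qed.

Lemma comp_bound (f : C -> C) r (a : Z -> C) (m : nat) (al : nat -> C) (v : C) :
  laurent f r a -> (forall k, (k < - (Z.of_nat m + 2))%Z -> a k = 0) -> a (-1)%Z = 0 ->
  (forall k, (1 <= k <= m)%nat -> a (- (Z.of_nat k + 2))%Z = al (k + 2)%nat * v) ->
  exists rho M, (0 < rho)%R /\ forall z, (0 < Cmod z < rho)%R ->
    Rle (Cmod (f z - (sum_n_m (fun k => al (k + 2)%nat / Cpow z (k + 2)) 1 m * v + / Cpow z 2 * a (-2)%Z))) M.
Proof.
  intros HL Hk Hm1 Hal.
  assert (L := pp_remove (m + 2) f r a HL (fun k hk => Hk k ltac:(lia))).
  destruct (Lim0_bounded _ _ L) as [rho [M [hrho HM]]].
  exists rho, M. split; auto. intros z hz. specialize (HM z hz).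
  assert (hz0 : z <> 0) by (apply nz_of_mod; lra).
  rewrite sum_split in HM.
  replace (sum_n_m (fun k => al (k + 2)%nat / Cpow z (k + 2)) 1 m * v) with
    (sum_n_m (fun k => a (- Z.of_nat (k + 2))%Z / Cpow z (k + 2)) 1 m).
  - replace (a (- Z.of_nat 1)%Z) with (RtoC 0) in HM by (rewrite <- Hm1; f_equal).
    replace (- Z.of_nat 2)%Z with (-2)%Z in HM by reflexivity.
    replace (f z - (sum_n_m (fun k => a (- Z.of_nat (k + 2))%Z / Cpow z (k + 2)) 1 m + / Cpow z 2 * a (-2)%Z))
      with (f z - (0 / Cpow z 1 + a (-2)%Z / Cpow z 2 + sum_n_m (fun k => a (- Z.of_nat (k + 2))%Z / Cpow z (k + 2)) 1 m)).
    exact HM. field. auto.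
  - rewrite <- (@sum_n_m_mult_r C_Ring). apply sum_n_m_ext_loc. intros k hk.
    replace (- Z.of_nat (k + 2))%Z with (- (Z.of_nat k + 2))%Z by lia. rewrite Hal by lia.
    cbn. field. apply Cpow_nz; auto.
Qed.

Lemma assemble (F : C -> V4) r (b : Z -> V4) (m : nat) (alpha : nat -> C) (v0 : V4) :
  laurentV F r b -> (forall k, (k < - (Z.of_nat m + 2))%Z -> b k = V4zero) -> b (-1)%Z = V4zero ->
  (forall k, (1 <= k <= m)%nat -> b (- (Z.of_nat k + 2))%Z = V4scale (alpha (k + 2)%nat) v0) ->
  exists (g : C -> V4) (r' M : R), (0 < r')%R /\
    (forall z : C, (0 < Cmod z < r')%R -> (V4norm (g z) <= M)%R) /\
    (forall z : C, (0 < Cmod z < r')%R ->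
       F z = V4add (V4scale (sum_n_m (fun k => alpha (k + 2)%nat / Cpow z (k + 2)) 1 m) v0)
             (V4add (V4scale (/ (Cpow z 2)) (b (-2)%Z)) (g z))).
Proof.
  intros [H1 [H2 [H3 H4]]] Hk Hm1 Hal.
  set (S z := sum_n_m (fun k => alpha (k + 2)%nat / Cpow z (k + 2)) 1 m).
  destruct (comp_bound _ r _ m alpha (vc1 v0) H1 (fun k hk => f_equal vc1 (Hk k hk)) (f_equal vc1 Hm1)
     (fun k hk => f_equal vc1 (Hal k hk))) as [r1 [M1 [hr1 HM1]]].
  destruct (comp_bound _ r _ m alpha (vc2 v0) H2 (fun k hk => f_equal vc2 (Hk k hk)) (f_equal vc2 Hm1)
     (fun k hk => f_equal vc2 (Hal k hk))) as [r2 [M2 [hr2 HM2]]].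
  destruct (comp_bound _ r _ m alpha (vc3 v0) H3 (fun k hk => f_equal vc3 (Hk k hk)) (f_equal vc3 Hm1)
     (fun k hk => f_equal vc3 (Hal k hk))) as [r3 [M3 [hr3 HM3]]].
  destruct (comp_bound _ r _ m alpha (vc4 v0) H4 (fun k hk => f_equal vc4 (Hk k hk)) (f_equal vc4 Hm1)
     (fun k hk => f_equal vc4 (Hal k hk))) as [r4 [M4 [hr4 HM4]]].
  exists (fun z => mkV4 (vc1 (F z) - (S z * vc1 v0 + / Cpow z 2 * vc1 (b (-2)%Z)))
                   (vc2 (F z) - (S z * vc2 v0 + / Cpow z 2 * vc2 (b (-2)%Z)))
                   (vc3 (F z) - (S z * vc3 v0 + / Cpow z 2 * vc3 (b (-2)%Z)))
                   (vc4 (F z) - (S z * vc4 v0 + / Cpow z 2 * vc4 (b (-2)%Z)))).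
  exists (Rmin (Rmin r1 r2) (Rmin r3 r4)), (M1 + M2 + M3 + M4)%R.
  assert (hmin : forall z, (0 < Cmod z < Rmin (Rmin r1 r2) (Rmin r3 r4))%R ->
     (0 < Cmod z < r1)%R /\ (0 < Cmod z < r2)%R /\ (0 < Cmod z < r3)%R /\ (0 < Cmod z < r4)%R).
  { intros z hz. generalize (Rmin_l (Rmin r1 r2) (Rmin r3 r4)) (Rmin_r (Rmin r1 r2) (Rmin r3 r4))
      (Rmin_l r1 r2) (Rmin_r r1 r2) (Rmin_l r3 r4) (Rmin_r r3 r4). lra. }
  split. apply Rmin_glb_lt; apply Rmin_glb_lt; auto.
  split.
  - intros z hz. destruct (hmin z hz) as [h1 [h2 [h3 h4]]]. unfold V4norm. cbn [vc1 vc2 vc3 vc4].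
    generalize (HM1 z h1) (HM2 z h2) (HM3 z h3) (HM4 z h4). unfold S. lra.
  - intros z hz. destruct (F z) as [f1 f2 f3 f4]. unfold V4add, V4scale. simpl. fold (S z).
    f_equal; ring.
Qed.

Ltac Csolve := repeat match goal with x : C |- _ => destruct x end;
  unfold Cminus, Cdiv, Cplus, Cmult, Copp, Cinv, Ci, RtoC, Cconj; simpl; f_equal; field.

Definition lc (c1 c2 c3 c4 : C) (v : V4) : C := c1 * vc1 v + c2 * vc2 v + c3 * vc3 v + c4 * vc4 v.

Definition v0c (c : C) : R4 := mkR4 (2 * fst c) (2 * snd c)
  (1 - (fst c * fst c + snd c * snd c)) (1 + (fst c * fst c + snd c * snd c)).
Definition wc (c : C) : V4 := mkV4 1 (- Ci) (- Cconj c) (Cconj c).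
Definition wc' (c : C) : V4 := mkV4 1 Ci (- c) c.
Definition yc : V4 := mkV4 0 0 (-1) 1.

Definition lcA (v : V4) := lc 0 0 (/2) (/2) v.
Definition lcP (c : C) (v : V4) := lc (/2) (Ci / 2) (- c / 2) (- c / 2) v.
Definition lcQ (c : C) (v : V4) := lc (/2) (- Ci / 2) (- Cconj c / 2) (- Cconj c / 2) v.
Definition lcS (c : C) (v : V4) := lc (- (Cconj c + c) / 2) (Ci * (c - Cconj c) / 2)
   ((-1 + c * Cconj c) / 2) ((1 + c * Cconj c) / 2) v.

Lemma decomp_c (c : C) (bb : V4) :
  bb = V4add (V4scale (lcA bb) (R4toV4 (v0c c)))
        (V4add (V4scale (lcP c bb) (wc c))
          (V4add (V4scale (lcQ c bb) (wc' c)) (V4scale (lcS c bb) yc))).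
Proof.
  destruct bb as [b1 b2 b3 b4]. unfold lcA, lcP, lcQ, lcS, lc, V4add, V4scale, R4toV4, v0c, wc, wc', yc. simpl.
  f_equal; Csolve.
Qed.

Lemma fun_c (p s h c : C) : lcA (mkV4 ((p + s) * h) ((- Ci * (p - s)) * h) ((1 - p * s) * h) ((1 + p * s) * h)) = h /\
  lcP c (mkV4 ((p + s) * h) ((- Ci * (p - s)) * h) ((1 - p * s) * h) ((1 + p * s) * h)) = h * (p - c) /\
  lcQ c (mkV4 ((p + s) * h) ((- Ci * (p - s)) * h) ((1 - p * s) * h) ((1 + p * s) * h)) = h * (s - Cconj c) /\
  lcS c (mkV4 ((p + s) * h) ((- Ci * (p - s)) * h) ((1 - p * s) * h) ((1 + p * s) * h)) = h * (p - c) * (s - Cconj c).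
Proof. unfold lcA, lcP, lcQ, lcS, lc. simpl. repeat split; Csolve. Qed.

Definition v0i : R4 := mkR4 0 0 (-1) 1.
Definition wi : V4 := mkV4 1 Ci 0 0.
Definition wi' : V4 := mkV4 1 (- Ci) 0 0.
Definition yi : V4 := mkV4 0 0 1 1.
Definition lcD (v : V4) := lc 0 0 (- / 2) (/2) v.
Definition lcBs (v : V4) := lc (/2) (- Ci / 2) 0 0 v.
Definition lcBp (v : V4) := lc (/2) (Ci / 2) 0 0 v.

Lemma decomp_i (bb : V4) :
  bb = V4add (V4scale (lcD bb) (R4toV4 v0i))
        (V4add (V4scale (lcBs bb) wi)
          (V4add (V4scale (lcBp bb) wi') (V4scale (lcA bb) yi))).
Proof.
  destruct bb as [b1 b2 b3 b4]. unfold lcA, lcD, lcBs, lcBp, lc, V4add, V4scale, R4toV4, v0i, wi, wi', yi. simpl.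
  f_equal; Csolve.
Qed.

Lemma fun_i (p s h : C) : 
  lcD (mkV4 ((p + s) * h) ((- Ci * (p - s)) * h) ((1 - p * s) * h) ((1 + p * s) * h)) = h * p * s /\
  lcBs (mkV4 ((p + s) * h) ((- Ci * (p - s)) * h) ((1 - p * s) * h) ((1 + p * s) * h)) = h * s /\
  lcBp (mkV4 ((p + s) * h) ((- Ci * (p - s)) * h) ((1 - p * s) * h) ((1 + p * s) * h)) = h * p.
Proof. unfold lcD, lcBs, lcBp, lc. simpl. repeat split; Csolve. Qed.

Lemma yz_zero (y z t1 t2 : R) : (t1 <> 0 \/ t2 <> 0) -> (y * t1 + z * t2 = 0)%R -> (y * t2 - z * t1 = 0)%R ->
  y = 0%R /\ z = 0%R.
Proof.
  intros ht e1 e2.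
  assert (hpos : (0 < t1 * t1 + t2 * t2)%R) by (destruct ht as [h|h]; [pose proof (Rle_0_sqr t2); pose proof (Rsqr_pos_lt t1 h)|pose proof (Rle_0_sqr t1); pose proof (Rsqr_pos_lt t2 h)]; unfold Rsqr in *; lra).
  assert (hy : (y * (t1 * t1 + t2 * t2) = 0)%R).
  { replace (y * (t1 * t1 + t2 * t2))%R with (t1 * (y * t1 + z * t2) + t2 * (y * t2 - z * t1))%R by ring.
    rewrite e1, e2. ring. }
  assert (hz : (z * (t1 * t1 + t2 * t2) = 0)%R).
  { replace (z * (t1 * t1 + t2 * t2))%R with (t2 * (y * t1 + z * t2) - t1 * (y * t2 - z * t1))%R by ring.
    rewrite e1, e2. ring. }
  split.
  - apply Rmult_integral in hy. destruct hy; auto. lra.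
  - apply Rmult_integral in hz. destruct hz; auto. lra.
Qed.

Lemma C_nz_comp (t : C) : t <> 0 -> (fst t <> 0 \/ snd t <> 0)%R.
Proof. intro h. destruct t as [t1 t2]. simpl. destruct (Req_dec t1 0); destruct (Req_dec t2 0); auto.
  exfalso. apply h. subst. reflexivity. Qed.

Lemma alg_c (c s t : C) : t <> 0 ->
  lightlike (v0c c) /\
  isotropic (V4add (V4scale s (R4toV4 (v0c c))) (V4scale t (wc c))) /\
  span_degenerate_3dim (v0c c) (V4Re (V4add (V4scale s (R4toV4 (v0c c))) (V4scale t (wc c))))
                                (V4Im (V4add (V4scale s (R4toV4 (v0c c))) (V4scale t (wc c)))).
Proof.
  intros ht. apply C_nz_comp in ht.
  destruct c as [a q]. destruct s as [s1 s2]. destruct t as [t1 t2]. simpl in ht.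
  assert (hv : v0c (a, q) <> R4zero).
  { intro e. apply (f_equal vr4) in e. unfold v0c in e. simpl in e. nra. }
  split; [|split].
  - split; auto. unfold lorR, v0c. simpl. ring.
  - unfold isotropic, lorC, V4add, V4scale, R4toV4, v0c, wc. simpl.
    unfold Cminus, Cdiv, Cplus, Cmult, Copp, Cinv, Ci, RtoC, Cconj; simpl; f_equal; ring.
  - split.
    + intros x y z e.
      assert (e1 := f_equal vr1 e). assert (e2 := f_equal vr2 e).
      assert (e3 := f_equal vr3 e). assert (e4 := f_equal vr4 e).
      unfold R4lin3, V4Re, V4Im, V4add, V4scale, R4toV4, v0c, wc in e1, e2, e3, e4. simpl in e1, e2, e3, e4.
      assert (X0 : (x + y * s1 + z * s2 = 0)%R) by nra.
      assert (E1 : (y * t1 + z * t2 = 0)%R) by nra.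
      assert (E2 : (y * t2 - z * t1 = 0)%R) by nra.
      destruct (yz_zero y z t1 t2 ht E1 E2) as [hy hz]. subst y z. split; [lra|split; reflexivity].
    + exists 1%R, 0%R, 0%R. simpl.
      replace (R4lin3 1 0 0 (v0c (a, q)) _ _) with (v0c (a, q)).
      2:{ unfold R4lin3. destruct (v0c (a,q)). simpl. f_equal; ring. }
      split; auto.
      unfold lorR, V4Re, V4Im, V4add, V4scale, R4toV4, v0c, wc. simpl. split; [ring|split; ring].
Qed.

Lemma alg_i (s t : C) : t <> 0 ->
  lightlike v0i /\
  isotropic (V4add (V4scale s (R4toV4 v0i)) (V4scale t wi)) /\
  span_degenerate_3dim v0i (V4Re (V4add (V4scale s (R4toV4 v0i)) (V4scale t wi)))
                           (V4Im (V4add (V4scale s (R4toV4 v0i)) (V4scale t wi))).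
Proof.
  intros ht. apply C_nz_comp in ht.
  destruct s as [s1 s2]. destruct t as [t1 t2]. simpl in ht.
  assert (hv : v0i <> R4zero).
  { intro e. apply (f_equal vr4) in e. unfold v0i in e. simpl in e. lra. }
  split; [|split].
  - split; auto. unfold lorR, v0i. simpl. ring.
  - unfold isotropic, lorC, V4add, V4scale, R4toV4, v0i, wi. simpl.
    unfold Cminus, Cdiv, Cplus, Cmult, Copp, Cinv, Ci, RtoC, Cconj; simpl; f_equal; ring.
  - split.
    + intros x y z e.
      assert (e1 := f_equal vr1 e). assert (e2 := f_equal vr2 e).
      assert (e3 := f_equal vr3 e). assert (e4 := f_equal vr4 e).
      unfold R4lin3, V4Re, V4Im, V4add, V4scale, R4toV4, v0i, wi in e1, e2, e3, e4. simpl in e1, e2, e3, e4.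
      assert (X0 : (x + y * s1 + z * s2 = 0)%R) by nra.
      assert (E1 : (y * t1 + z * t2 = 0)%R) by nra.
      assert (E2 : (y * t2 - z * t1 = 0)%R) by nra.
      destruct (yz_zero y z t1 t2 ht E1 E2) as [hy hz]. subst y z. split; [lra|split; reflexivity].
    + exists 1%R, 0%R, 0%R. simpl.
      replace (R4lin3 1 0 0 v0i _ _) with v0i.
      2:{ unfold R4lin3, v0i. simpl. f_equal; ring. }
      split; auto.
      unfold lorR, V4Re, V4Im, V4add, V4scale, R4toV4, v0i, wi. simpl. split; [ring|split; ring].
Qed.

Lemma laurent4 (F : C -> V4) r b (c1 c2 c3 c4 : C) : laurentV F r b ->
  laurent (fun z => lc c1 c2 c3 c4 (F z)) r (fun k => lc c1 c2 c3 c4 (b k)).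
Proof.
  intros [H1 [H2 [H3 H4]]].
  assert (L := laurent_lin _ _ _ _ _ c1 c2 H1 H2).
  assert (L2 := laurent_lin _ _ _ _ _ 1 c3 L H3).
  assert (L3 := laurent_lin _ _ _ _ _ 1 c4 L2 H4).
  eapply laurent_ext; [| |exact L3]; intros; cbv beta; unfold lc; ring.
Qed.

Lemma V4scale0 v : V4scale 0 v = V4zero.
Proof. destruct v. unfold V4scale, V4zero. simpl. f_equal; ring. Qed.
Lemma V4add0r v : V4add v V4zero = v.
Proof. destruct v. unfold V4add, V4zero. simpl. f_equal; ring. Qed.

Lemma conclude (F : C -> V4) r b (m : nat) (v0r : R4) (w w' y : V4) (K P Q S : Z -> C) (kap : C) :
  laurentV F r b -> (1 <= m)%nat -> has_orderV b (- (Z.of_nat m + 2))%Z -> b (-1)%Z = V4zero ->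
  (forall k, b k = V4add (V4scale (K k) (R4toV4 v0r))
       (V4add (V4scale (P k) w) (V4add (V4scale (Q k) w') (V4scale (S k) y)))) ->
  (forall k, (k < -2)%Z -> P k = 0) -> (forall k, (k <= -2)%Z -> Q k = 0) ->
  (forall k, (k <= -2)%Z -> S k = 0) ->
  P (-2)%Z = K (- (Z.of_nat m + 2))%Z * kap -> kap <> 0 ->
  (forall s t : C, t <> 0 -> lightlike v0r /\ isotropic (V4add (V4scale s (R4toV4 v0r)) (V4scale t w)) /\
     span_degenerate_3dim v0r (V4Re (V4add (V4scale s (R4toV4 v0r)) (V4scale t w)))
                              (V4Im (V4add (V4scale s (R4toV4 v0r)) (V4scale t w)))) ->
  exists (alpha : nat -> C) (v0 : R4) (v1 : V4) (g : C -> V4) (r' M : R),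
    alpha (m + 2)%nat <> 0 /\
    lightlike v0 /\ isotropic v1 /\
    span_degenerate_3dim v0 (V4Re v1) (V4Im v1) /\
    (0 < r')%R /\
    (forall z : C, (0 < Cmod z < r')%R -> (V4norm (g z) <= M)%R) /\
    (forall z : C, (0 < Cmod z < r')%R ->
       F z =
       V4add (V4scale (sum_n_m (fun k => alpha (k + 2)%nat / Cpow z (k + 2)) 1 m)
                      (R4toV4 v0))
             (V4add (V4scale (/ (Cpow z 2)) v1) (g z))).
Proof.
  intros HL hm [Hbn Hbz] Hm1 Hdec HP HQ HS HP2 hkap Halg.
  assert (Hbk : forall k, (k < -2)%Z -> b k = V4scale (K k) (R4toV4 v0r)).
  { intros k hk. rewrite Hdec, HP, HQ, HS by lia. rewrite !V4scale0, !V4add0r. reflexivity. }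
  assert (Hb2 : b (-2)%Z = V4add (V4scale (K (-2)%Z) (R4toV4 v0r)) (V4scale (P (-2)%Z) w)).
  { rewrite Hdec, (HQ (-2)%Z), (HS (-2)%Z) by lia. rewrite !V4scale0, !V4add0r. reflexivity. }
  assert (hK : K (- (Z.of_nat m + 2))%Z <> 0).
  { intro e. apply Hbn. rewrite Hbk by lia. rewrite e. apply V4scale0. }
  assert (ht : P (-2)%Z <> 0) by (rewrite HP2; apply Cmult_neq_0; auto).
  set (alpha := fun n : nat => K (- Z.of_nat n)%Z).
  destruct (assemble F r b m alpha (R4toV4 v0r) HL (fun k hk => Hbz k hk) Hm1) as [g [r' [M [hr' [HM Heq]]]]].
  { intros k hk. unfold alpha. rewrite Hbk by lia. f_equal. f_equal. lia. }
  exists alpha, v0r, (b (-2)%Z), g, r', M.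
  destruct (Halg (K (-2)%Z) (P (-2)%Z) ht) as [A1 [A2 A3]].
  split. unfold alpha. replace (- Z.of_nat (m + 2))%Z with (- (Z.of_nat m + 2))%Z by lia. exact hK.
  split. exact A1. split. rewrite Hb2; exact A2. split. rewrite Hb2; exact A3.
  split. exact hr'. split. exact HM. exact Heq.
Qed.

Lemma lc_zero c1 c2 c3 c4 : lc c1 c2 c3 c4 V4zero = 0.
Proof. unfold lc, V4zero. simpl. ring. Qed.

Lemma laurent_sub_const (f : C -> C) r a (c : C) : laurent f r a ->
  laurent (fun z => f z - c) r (fun k => if Z.eqb k 0 then a k - c else a k).
Proof.
  intros HL. assert (L := laurent_lin _ _ _ _ _ 1 (-1) HL (laurent_mono c 0 r (proj1 HL))).
  eapply laurent_ext; [| |exact L].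
  - intro k. cbv beta. replace (- Z.of_nat 0)%Z with 0%Z by reflexivity.
    destruct (Z.eqb k 0); ring.
  - intros z hz. cbv beta. simpl. field.
Qed.

Theorem mainTheorem4
  (phi psi hp : C -> C) (r : R) (aphi apsi ah : Z -> C) (b : Z -> V4)
  (m d : nat)
  (Hphi : laurent phi r aphi) (Hpsi : laurent psi r apsi) (Hh : laurent hp r ah)
  (Hreg : forall z : C, (0 < Cmod z < r)%R -> phi z <> Cconj (psi z) /\ hp z <> 0)
  (Hb : laurentV (xz phi psi hp) r b)
  (Hgood : good_singular_end aphi apsi)
  (Hm : (1 <= m)%nat)
  (Hind : end_index aphi apsi (Z.of_nat m))
  (Hd : has_orderV b (- (Z.of_nat d + 1))%Z)
  (Hmult : (Z.of_nat d - Z.of_nat m = 1)%Z)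
  (Hflux : b (-1)%Z = V4zero) :
  exists (alpha : nat -> C) (v0 : R4) (v1 : V4) (g : C -> V4) (r' M : R),
    alpha (m + 2)%nat <> 0 /\
    lightlike v0 /\ isotropic v1 /\
    span_degenerate_3dim v0 (V4Re v1) (V4Im v1) /\
    (0 < r')%R /\
    (forall z : C, (0 < Cmod z < r')%R -> (V4norm (g z) <= M)%R) /\
    (forall z : C, (0 < Cmod z < r')%R ->
       xz phi psi hp z =
       V4add (V4scale (sum_n_m (fun k => alpha (k + 2)%nat / Cpow z (k + 2)) 1 m)
                      (R4toV4 v0))
             (V4add (V4scale (/ (Cpow z 2)) v1) (g z))).
Proof.
  assert (hr : (0 < r)%R) by exact (proj1 Hphi).
  replace (- (Z.of_nat d + 1))%Z with (- (Z.of_nat m + 2))%Z in Hd by lia.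
  assert (Hbz : forall c1 c2 c3 c4 k, (k < - (Z.of_nat m + 2))%Z -> lc c1 c2 c3 c4 (b k) = 0).
  { intros. rewrite (proj2 Hd k) by auto. apply lc_zero. }
  destruct Hind as [[v [m' [n' [Hmv1 [Hmv2 Hcase]]]]] | [_ Hi]]; [| lia].
  destruct Hcase as [[Hlt Heq] | [Hlt Heq]]; [| destruct Hmv2 as [hn' _]; lia].
  assert (m' = m) by lia. subst m'.
  destruct v as [c|].
  -
    destruct Hmv1 as [_ [Hf1 Hf2]]. destruct Hmv2 as [hn' [Hg1 Hg2]]. simpl in Hg1, Hg2.
    set (af := fun k => if Z.eqb k 0 then aphi k - c else aphi k) in *.
    set (ag := fun k => if Z.eqb k 0 then apsi k - Cconj c else apsi k) in *.
    assert (Lf := laurent_sub_const phi r aphi c Hphi). fold af in Lf.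
    assert (Lg := laurent_sub_const psi r apsi (Cconj c) Hpsi). fold ag in Lg.
    assert (LA : laurent hp r (fun k => lcA (b k))).
    { eapply laurent_ext; [| |exact (laurent4 _ r b 0 0 (/2) (/2) Hb)]. reflexivity.
      intros z hz. exact (proj1 (fun_c (phi z) (psi z) (hp z) c)). }
    assert (LP : laurent (fun z => hp z * (phi z - c)) r (fun k => lcP c (b k))).
    { eapply laurent_ext; [| |exact (laurent4 _ r b (/2) (Ci / 2) (- c / 2) (- c / 2) Hb)]. reflexivity.
      intros z hz. exact (proj1 (proj2 (fun_c (phi z) (psi z) (hp z) c))). }
    assert (LQ : laurent (fun z => hp z * (psi z - Cconj c)) r (fun k => lcQ c (b k))).
    { eapply laurent_ext; [| |exact (laurent4 _ r b (/2) (- Ci / 2) (- Cconj c / 2) (- Cconj c / 2) Hb)]. reflexivity.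
      intros z hz. exact (proj1 (proj2 (proj2 (fun_c (phi z) (psi z) (hp z) c)))). }
    assert (LS : laurent (fun z => hp z * (phi z - c) * (psi z - Cconj c)) r (fun k => lcS c (b k))).
    { eapply laurent_ext; [| |exact (laurent4 _ r b (- (Cconj c + c) / 2) (Ci * (c - Cconj c) / 2)
         ((-1 + c * Cconj c) / 2) ((1 + c * Cconj c) / 2) Hb)]. reflexivity.
      intros z hz. exact (proj2 (proj2 (proj2 (fun_c (phi z) (psi z) (hp z) c)))). }
    assert (L_h := lim_coef hp r _ (m + 2) 0 LA (fun k hk => Hbz _ _ _ _ k ltac:(lia))).
    replace (Z.of_nat 0 - Z.of_nat (m + 2))%Z with (- (Z.of_nat m + 2))%Z in L_h by lia.
    assert (L_f := lim_coef _ r af 0 m Lf (fun k hk => Hf2 k ltac:(lia))).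
    replace (Z.of_nat m - Z.of_nat 0)%Z with (Z.of_nat m) in L_f by lia.
    assert (L_g := lim_coef _ r ag 0 m Lg (fun k hk => Hg2 k ltac:(lia))).
    replace (Z.of_nat m - Z.of_nat 0)%Z with (Z.of_nat m) in L_g by lia.
    assert (eg : ag (Z.of_nat m) = 0) by (exact (Hg2 (Z.of_nat m) ltac:(lia))). rewrite eg in L_g.
    assert (L_g0 := lim_coef _ r ag 0 0 Lg (fun k hk => Hg2 k ltac:(lia))).
    assert (eg0 : ag (Z.of_nat 0 - Z.of_nat 0)%Z = 0) by (exact (Hg2 (Z.of_nat 0 - Z.of_nat 0)%Z ltac:(lia))). rewrite eg0 in L_g0.
    set (KA := lcA (b (- (Z.of_nat m + 2))%Z)) in *.
    assert (Hpw : forall z : C, Cpow z (m + 2) = Cpow z m * Cpow z 2).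
    { intros z. apply Cpow_add_r. }
    assert (LimP : Lim0 (fun z => Cpow z 2 * (hp z * (phi z - c))) (KA * af (Z.of_nat m))).
    { eapply Lim0_ext; [|exact (Lim0_mult _ _ _ _ L_h L_f)]. exists 1%R. split. lra.
      intros z hz. assert (hz0 := nz_of_mod z ltac:(lra)). cbv beta. rewrite Hpw by auto.
      assert (Cpow z m <> 0) by (apply Cpow_nz; auto). simpl. field. auto. }
    assert (LimQ : Lim0 (fun z => Cpow z 2 * (hp z * (psi z - Cconj c))) (KA * 0)).
    { eapply Lim0_ext; [|exact (Lim0_mult _ _ _ _ L_h L_g)]. exists 1%R. split. lra.
      intros z hz. assert (hz0 := nz_of_mod z ltac:(lra)). cbv beta. rewrite Hpw by auto.
      assert (Cpow z m <> 0) by (apply Cpow_nz; auto). simpl. field. auto. }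
    assert (LimS : Lim0 (fun z => Cpow z 2 * (hp z * (phi z - c) * (psi z - Cconj c))) (KA * af (Z.of_nat m) * 0)).
    { eapply Lim0_ext; [|exact (Lim0_mult _ _ _ _ (Lim0_mult _ _ _ _ L_h L_f) L_g0)]. exists 1%R. split. lra.
      intros z hz. assert (hz0 := nz_of_mod z ltac:(lra)). cbv beta. rewrite Hpw by auto.
      assert (Cpow z m <> 0) by (apply Cpow_nz; auto). simpl. field. auto. }
    destruct (coef_lim _ r _ 2 _ LP LimP) as [HP HP2].
    destruct (coef_lim _ r _ 2 _ LQ LimQ) as [HQ HQ2].
    destruct (coef_lim _ r _ 2 _ LS LimS) as [HS HS2].
    apply (conclude _ r b m (v0c c) (wc c) (wc' c) yc (fun k => lcA (b k)) (fun k => lcP c (b k))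
      (fun k => lcQ c (b k)) (fun k => lcS c (b k)) (af (Z.of_nat m)) Hb Hm Hd Hflux).
    + intro k. apply decomp_c.
    + intros k hk. apply HP. simpl. lia.
    + intros k hk. destruct (Z.eq_dec k (-2)) as [->|hne]. cbv beta. change (-2)%Z with (- Z.of_nat 2)%Z. rewrite HQ2. ring. apply HQ. simpl. lia.
    + intros k hk. destruct (Z.eq_dec k (-2)) as [->|hne]. cbv beta. change (-2)%Z with (- Z.of_nat 2)%Z. rewrite HS2. ring. apply HS. simpl. lia.
    + exact HP2.
    + exact Hf1.
    + intros s t ht. apply alg_c. exact ht.
  -
    destruct Hmv1 as [_ [Hp1 Hp2]]. destruct Hmv2 as [hn' [Hq1 Hq2]].
    assert (LA : laurent hp r (fun k => lcA (b k))).
    { eapply laurent_ext; [| |exact (laurent4 _ r b 0 0 (/2) (/2) Hb)]. reflexivity.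
      intros z hz. exact (proj1 (fun_c (phi z) (psi z) (hp z) 0)). }
    assert (LD : laurent (fun z => hp z * phi z * psi z) r (fun k => lcD (b k))).
    { eapply laurent_ext; [| |exact (laurent4 _ r b 0 0 (- / 2) (/2) Hb)]. reflexivity.
      intros z hz. exact (proj1 (fun_i (phi z) (psi z) (hp z))). }
    assert (LBs : laurent (fun z => hp z * psi z) r (fun k => lcBs (b k))).
    { eapply laurent_ext; [| |exact (laurent4 _ r b (/2) (- Ci / 2) 0 0 Hb)]. reflexivity.
      intros z hz. exact (proj1 (proj2 (fun_i (phi z) (psi z) (hp z)))). }
    assert (LBp : laurent (fun z => hp z * phi z) r (fun k => lcBp (b k))).
    { eapply laurent_ext; [| |exact (laurent4 _ r b (/2) (Ci / 2) 0 0 Hb)]. reflexivity.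
      intros z hz. exact (proj2 (proj2 (fun_i (phi z) (psi z) (hp z)))). }
    assert (L_H := lim_coef _ r _ (m + 2) 0 LD (fun k hk => Hbz _ _ _ _ k ltac:(lia))).
    replace (Z.of_nat 0 - Z.of_nat (m + 2))%Z with (- (Z.of_nat m + 2))%Z in L_H by lia.
    assert (L_p := lim_coef phi r aphi m 0 Hphi (fun k hk => Hp2 k ltac:(lia))).
    replace (Z.of_nat 0 - Z.of_nat m)%Z with (- Z.of_nat m)%Z in L_p by lia.
    assert (L_q := lim_coef psi r apsi n' 0 Hpsi (fun k hk => Hq2 k ltac:(lia))).
    replace (Z.of_nat 0 - Z.of_nat n')%Z with (- Z.of_nat n')%Z in L_q by lia.
    destruct (Lim0_nonzero _ _ L_p Hp1) as [rho1 [hrho1 Hnz1]].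
    destruct (Lim0_nonzero _ _ L_q Hq1) as [rho2 [hrho2 Hnz2]].
    set (KD := lcD (b (- (Z.of_nat m + 2))%Z)) in *.
    set (ap := aphi (- Z.of_nat m)%Z) in *.
    set (aq := apsi (- Z.of_nat n')%Z) in *.
    assert (Hpw : forall z : C, Cpow z (m + 2) = Cpow z m * Cpow z 2) by (intro z; apply Cpow_add_r).
    assert (Hpw2 : forall z : C, Cpow z n' = Cpow z m * Cpow z (n' - m)).
    { intro z. rewrite <- Cpow_add_r. f_equal. lia. }
    assert (nzp : forall z, (0 < Cmod z < rho1)%R -> phi z <> 0).
    { intros z hz e. apply (Hnz1 z hz). cbv beta. rewrite e. simpl. field. }
    assert (nzq : forall z, (0 < Cmod z < rho2)%R -> psi z <> 0).
    { intros z hz e. apply (Hnz2 z hz). cbv beta. rewrite e. simpl. field. }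
    assert (LimBs : Lim0 (fun z => Cpow z 2 * (hp z * psi z)) (KD * / ap)).
    { eapply Lim0_ext; [|exact (Lim0_mult _ _ _ _ L_H (Lim0_inv _ _ Hp1 L_p))]. exists rho1. split. lra.
      intros z hz. assert (hz0 := nz_of_mod z ltac:(lra)). cbv beta. rewrite Hpw.
      assert (Cpow z m <> 0) by (apply Cpow_nz; auto). specialize (nzp z hz). simpl. field. auto. }
    assert (LimBp : Lim0 (fun z => Cpow z 2 * (hp z * phi z)) (KD * / aq * 0)).
    { eapply Lim0_ext; [|exact (Lim0_mult _ _ _ _ (Lim0_mult _ _ _ _ L_H (Lim0_inv _ _ Hq1 L_q))
          (Lim0_pow (n' - m) ltac:(lia)))]. exists rho2. split. lra.
      intros z hz. assert (hz0 := nz_of_mod z ltac:(lra)). cbv beta. rewrite Hpw, Hpw2.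
      assert (Cpow z m <> 0) by (apply Cpow_nz; auto).
      assert (Cpow z (n' - m) <> 0) by (apply Cpow_nz; auto). specialize (nzq z hz). simpl. field. auto. }
    assert (LimA : Lim0 (fun z => Cpow z 2 * hp z) (KD * / ap * / aq * 0)).
    { eapply Lim0_ext; [|exact (Lim0_mult _ _ _ _ (Lim0_mult _ _ _ _ (Lim0_mult _ _ _ _ L_H (Lim0_inv _ _ Hp1 L_p))
          (Lim0_inv _ _ Hq1 L_q)) (Lim0_pow n' ltac:(lia)))]. exists (Rmin rho1 rho2). split.
      apply Rmin_glb_lt; auto.
      intros z hz. assert (h1 : (0 < Cmod z < rho1)%R) by (generalize (Rmin_l rho1 rho2); lra).
      assert (h2 : (0 < Cmod z < rho2)%R) by (generalize (Rmin_r rho1 rho2); lra).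
      assert (hz0 := nz_of_mod z ltac:(lra)). cbv beta. rewrite Hpw, Hpw2.
      assert (Cpow z m <> 0) by (apply Cpow_nz; auto).
      assert (Cpow z (n' - m) <> 0) by (apply Cpow_nz; auto).
      specialize (nzq z h2). specialize (nzp z h1). simpl. field. auto. }
    destruct (coef_lim _ r _ 2 _ LBs LimBs) as [HP HP2].
    destruct (coef_lim _ r _ 2 _ LBp LimBp) as [HQ HQ2].
    destruct (coef_lim _ r _ 2 _ LA LimA) as [HS HS2].
    apply (conclude _ r b m v0i wi wi' yi (fun k => lcD (b k)) (fun k => lcBs (b k))
      (fun k => lcBp (b k)) (fun k => lcA (b k)) (/ ap) Hb Hm Hd Hflux).
    + intro k. apply decomp_i.
    + intros k hk. apply HP. simpl. lia.
    + intros k hk. destruct (Z.eq_dec k (-2)) as [->|hne]. cbv beta. change (-2)%Z with (- Z.of_nat 2)%Z. rewrite HQ2. ring. apply HQ. simpl. lia.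
    + intros k hk. destruct (Z.eq_dec k (-2)) as [->|hne]. cbv beta. change (-2)%Z with (- Z.of_nat 2)%Z. rewrite HS2. ring. apply HS. simpl. lia.
    + exact HP2.
    + intro e. assert (h1 : ap * / ap = 1) by (field; exact Hp1). rewrite e in h1.
      replace (ap * 0) with (RtoC 0) in h1 by ring. apply (f_equal fst) in h1. simpl in h1. lra.
    + intros s t ht. apply alg_i. exact ht.
Qed.
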